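(* Let $\mathbb{M}\subset\mathbb{T}^d$ be Lebesgue measurable. The set of vectors $\mathbf{a}\in\mathbb{R}^d$ generating an irrelevant direction (together with $\mathbf{0}$) is a linear subspace of $\mathbb{R}^d$. Moreover, if $0<|\mathbb{M}|<|\mathbb{T}^d|$, then at least one standard unit vector $\mathbf{e}_i$ ($1\le i\le d$) generates a relevant direction.
   Context: $\mathbb{T}^d=(\mathbb{R}/2\pi\mathbb{Z})^d$ with Lebesgue measure $|\cdot|$, $|\mathbb{T}^d|=(2\pi)^d$. For $\mathbf{a}\in\mathbb{R}^d$, $\mathbb{M}+\mathbf{a}$ is the translate of $\mathbb{M}$ (mod $2\pi$ in each coordinate), and $\Lambda_{\mathbb{M}}(\mathbf{a})=|\mathbb{M}\setminus(\mathbb{M}+\mathbf{a})|$. A vector $\mathbf{a}\in\mathbb{R}^d$ generates an irrelevant direction (with respect to $\mathbb{M}$) if $\Lambda_{\mathbb{M}}(\kappa\mathbf{a})=0$ for all $\kappa\in\mathbb{R}$; otherwise it generates a relevant direction. $\mathbf{e}_i$ denotes the $i$-th standard unit vector of $\mathbb{R}^d$. *)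

(* Defs.v *)
From HB Require Import structures.
From mathcomp Require Import all_boot all_order all_algebra.
From mathcomp Require Import all_classical all_reals all_analysis.
Set Implicit Arguments. Unset Strict Implicit. Unset Printing Implicit Defensive.
Import Order.TTheory GRing.Theory Num.Theory.
Local Open Scope classical_set_scope.
Local Open Scope ring_scope.

Section Torus.
Variable R : realType.

(* Iterated Lebesgue integral over R^n, points of R^n as n-tuples (which
   carry the product (Borel) sigma-algebra of mathcomp-analysis).  For
   measurable nonnegative integrands this is the integral against the
   n-dimensional Lebesgue measure (Tonelli). *)
Fixpoint iterint (n : nat) : (n.-tuple R -> \bar R) -> \bar R :=
  match n return (n.-tuple R -> \bar R) -> \bar R with
  | 0 => fun f => f [tuple]
  | n'.+1 => fun f =>
      (\int[@lebesgue_measure R]_x iterint (fun t => f (cons_tuple x t)))%E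
  end.

Definition row2tuple (d : nat) (v : 'rV[R]_d) : d.-tuple R :=
  [tuple v ord0 i | i < d].

Definition borelT (d : nat) (B : set (d.-tuple R)) : Prop := measurable B.

Definition volT (d : nat) (B : set (d.-tuple R)) : \bar R :=
  iterint (fun t => (\1_B t)%:E).

Definition leb (d : nat) (A : set 'rV[R]_d) : \bar R :=
  ereal_inf [set volT B | B in
    [set B : set (d.-tuple R) | borelT B /\ A `<=` @row2tuple d @^-1` B]].

(* Lebesgue measurability: sandwiched between Borel sets differing by a
   null set (i.e. measurable for the completed measure) *)
Definition leb_measurable (d : nat) (A : set 'rV[R]_d) : Prop :=
  exists B1 B2 : set (d.-tuple R),
    [/\ borelT B1, borelT B2,
        @row2tuple d @^-1` B1 `<=` A, A `<=` @row2tuple d @^-1` B2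
      & volT (B2 `\` B1) = 0%E].

(* the torus T^d = (R / 2 pi Z)^d, realised as the fundamental box [0, 2pi)^d *)
Definition torus (d : nat) : set 'rV[R]_d :=
  [set x | forall i : 'I_d, 0 <= x ord0 i < 2 * pi].

Definition translate (d : nat) (M : set 'rV[R]_d) (a : 'rV[R]_d) : set 'rV[R]_d :=
  [set x | torus x /\ exists2 m, M m & forall i : 'I_d,
      exists k : int, x ord0 i = m ord0 i + a ord0 i + k%:~R * (2 * pi)].

Definition Lambda (d : nat) (M : set 'rV[R]_d) (a : 'rV[R]_d) : \bar R :=
  leb (M `\` translate M a).

Definition irrelevant (d : nat) (M : set 'rV[R]_d) (a : 'rV[R]_d) : Prop :=
  forall kappa : R, Lambda M (kappa *: a) = 0%E.

Definition unitv (d : nat) (i : 'I_d) : 'rV[R]_d := delta_mx ord0 i.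

End Torus.

(* Main.v *)
Require Import Defs.
From HB Require Import structures.
From mathcomp Require Import all_boot all_order all_algebra.
From mathcomp Require Import all_classical all_reals all_analysis.
From mathcomp Require Import measurable_realfun.
From mathcomp Require Import ring lra.
Import Order.TTheory GRing.Theory Num.Theory.
Set Implicit Arguments. Unset Strict Implicit. Unset Printing Implicit Defensive.
Local Open Scope classical_set_scope.
Local Open Scope ring_scope.
Section It.
Variable R : realType.
Local Open Scope ereal_scope.

Lemma iterint_ge0 n (f : n.-tuple R -> \bar R) :
  (forall t, 0 <= f t) -> 0 <= iterint f.
Proof.
elim: n f => [|n IH] f f0 /=; first exact: f0.
by apply: integral_ge0 => x _; apply: IH => t; exact: f0.
Qed.

Lemma iterint_mfun d' (T : measurableType d') n (f : T * n.-tuple R -> \bar R) :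
  measurable_fun setT f -> (forall z, 0 <= f z) ->
  measurable_fun setT (fun y => iterint (fun t => f (y, t))).
Proof.
elim: n d' T f => [|n IH] d' T f mf f0 /=.
  exact: (measurableT_comp mf (pair2_measurable _)).
pose g := fun (z : T * R * n.-tuple R) => f (z.1.1, cons_tuple z.1.2 z.2).
have mg : measurable_fun setT g.
  apply: (measurableT_comp mf); apply/measurable_fun_pairP; split.
    exact: (measurableT_comp measurable_fst measurable_fst).
  exact: (measurable_cons (measurableT_comp measurable_snd measurable_fst) measurable_snd).
have mG := IH _ _ g mg (fun z => f0 _).
exact: (measurable_fun_fubini_tonelli_F (m2 := lebesgue_measure) _ mG
  (fun p => iterint_ge0 (fun t => f0 _))).
Qed.

Lemma mcons n : measurable_fun setT (fun p : R * n.-tuple R => cons_tuple p.1 p.2).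
Proof. exact: (measurable_cons measurable_fst measurable_snd). Qed.

Lemma mcons1 n (x : R) : measurable_fun setT (fun t : n.-tuple R => cons_tuple x t).
Proof. exact: (measurableT_comp (@mcons n) (pair1_measurable x)). Qed.



Lemma iterint_mfun_cons n (f : n.+1.-tuple R -> \bar R) :
  measurable_fun setT f -> (forall t, 0 <= f t) ->
  measurable_fun setT (fun x : R => iterint (fun t => f (cons_tuple x t))).
Proof.
move=> mf f0.
exact: (iterint_mfun (f := fun p : R * n.-tuple R => f (cons_tuple p.1 p.2))
  (measurableT_comp mf (@mcons n)) (fun _ => f0 _)).
Qed.

Lemma iterint_le n (f g : n.-tuple R -> \bar R) :
  measurable_fun setT f -> measurable_fun setT g ->
  (forall t, 0 <= f t) -> (forall t, f t <= g t) -> iterint f <= iterint g.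
Proof.
elim: n f g => [|n IH] f g mf mg f0 fg /=; first exact: fg.
have g0 : forall t, 0 <= g t by move=> t; exact: le_trans (f0 t) (fg t).
apply: ge0_le_integral => //.
- by move=> x _; apply: iterint_ge0 => t; exact: f0.
- exact: iterint_mfun_cons.
- exact: iterint_mfun_cons.
- move=> x _; apply: IH => //.
  + exact: (measurableT_comp mf (@mcons1 n x)).
  + exact: (measurableT_comp mg (@mcons1 n x)).
Qed.

Lemma iterintD n (f g : n.-tuple R -> \bar R) :
  measurable_fun setT f -> measurable_fun setT g ->
  (forall t, 0 <= f t) -> (forall t, 0 <= g t) ->
  iterint (fun t => f t + g t) = iterint f + iterint g.
Proof.
elim: n f g => [|n IH] f g mf mg f0 g0 //=.
rewrite -ge0_integralD //.
- apply: eq_integral => x _; apply: IH => //.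
  + exact: (measurableT_comp mf (@mcons1 n x)).
  + exact: (measurableT_comp mg (@mcons1 n x)).
- by move=> x _; apply: iterint_ge0 => t; exact: f0.
- exact: iterint_mfun_cons.
- by move=> x _; apply: iterint_ge0 => t; exact: g0.
- exact: iterint_mfun_cons.
Qed.

Lemma iterintZ n (f : n.-tuple R -> \bar R) (k : \bar R) :
  measurable_fun setT f -> (forall t, 0 <= f t) -> 0 <= k ->
  iterint (fun t => k * f t) = k * iterint f.
Proof.
elim: n f => [|n IH] f mf f0 k0 //=.
rewrite -ge0_integralZl //.
- apply: eq_integral => x _; apply: IH => //.
  exact: (measurableT_comp mf (@mcons1 n x)).
- exact: iterint_mfun_cons.
- by move=> x _; apply: iterint_ge0 => t; exact: f0.
Qed.

Lemma iterint0 n : iterint (fun t : n.-tuple R => 0) = 0.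
Proof.
elim: n => [|n IH] //=.
rewrite (eq_integral (cst 0)) ?integral0 // => x _; exact: IH.
Qed.

Lemma iterint_swap1 n (G : R * n.-tuple R -> \bar R) :
  measurable_fun setT G -> (forall z, 0 <= G z) ->
  \int[lebesgue_measure]_y iterint (fun t => G (y, t)) =
  iterint (fun t => \int[lebesgue_measure]_y G (y, t)).
Proof.
elim: n G => [|n IH] G mG G0 //=.
pose g := fun (z : R * R * n.-tuple R) => G (z.1.1, cons_tuple z.1.2 z.2).
have mg : measurable_fun setT g.
  apply: (measurableT_comp mG); apply/measurable_fun_pairP; split.
    exact: (measurableT_comp measurable_fst measurable_fst).
  exact: (measurable_cons (measurableT_comp measurable_snd measurable_fst) measurable_snd).
have mF := iterint_mfun mg (fun z => G0 _).
have := fubini_tonelli (m1 := lebesgue_measure) (m2 := lebesgue_measure) _ mF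
  (fun p => iterint_ge0 (fun t => G0 _)).
rewrite /= => ->.
apply: eq_integral => x _.
have mGx : measurable_fun setT (fun p : R * n.-tuple R => G (p.1, cons_tuple x p.2)).
  apply: (measurableT_comp mG); apply/measurable_fun_pairP; split.
    exact: measurable_fst.
  exact: (measurableT_comp (@mcons1 n x) measurable_snd).
exact: (IH _ mGx (fun _ => G0 _)).
Qed.

Lemma iterint_swap m n (F : m.-tuple R * n.-tuple R -> \bar R) :
  measurable_fun setT F -> (forall z, 0 <= F z) ->
  iterint (fun s => iterint (fun t => F (s, t))) =
  iterint (fun t => iterint (fun s => F (s, t))).
Proof.
elim: m F => [|m IH] F mF F0 //=.
transitivity (\int[lebesgue_measure]_x
   iterint (fun t => iterint (fun s => F (cons_tuple x s, t)))).
  apply: eq_integral => x _.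
  have mFx : measurable_fun setT (fun p : m.-tuple R * n.-tuple R => F (cons_tuple x p.1, p.2)).
    apply: (measurableT_comp mF); apply/measurable_fun_pairP; split.
      exact: (measurableT_comp (@mcons1 m x) measurable_fst).
    exact: measurable_snd.
  exact: (IH _ mFx (fun _ => F0 _)).
pose G := fun p : R * n.-tuple R => iterint (fun s => F (cons_tuple p.1 s, p.2)).
have mG : measurable_fun setT G.
  pose F' := fun z : (R * n.-tuple R) * m.-tuple R => F (cons_tuple z.1.1 z.2, z.1.2).
  have mF' : measurable_fun setT F'.
    apply: (measurableT_comp mF); apply/measurable_fun_pairP; split.
      exact: (measurable_cons (measurableT_comp measurable_fst measurable_fst) measurable_snd).
    exact: (measurableT_comp measurable_snd measurable_fst).
  exact: (iterint_mfun mF' (fun _ => F0 _)).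
exact: (iterint_swap1 mG (fun p => iterint_ge0 (fun s => F0 _))).
Qed.

End It.

Section Shift.
Variable R : realType.
Local Open Scope ereal_scope.
Variable s : R.
Let phi := fun x : R => (x + s)%R.
Let mphi : measurable_fun setT phi.
Proof. exact: measurable_funD. Qed.

Definition shiftm : set (measurableTypeR R) -> \bar R :=
  fun A => lebesgue_measure (phi @^-1` A).

Let shiftm0 : shiftm set0 = 0.
Proof. by rewrite /shiftm preimage_set0 measure0. Qed.

Let shiftm_ge0 A : 0 <= shiftm A.
Proof. exact: measure_ge0. Qed.

Let shiftm_sigma_additive : semi_sigma_additive shiftm.
Proof.
move=> F mF tF mUF; rewrite /shiftm preimage_bigcup.
apply: measure_semi_sigma_additive.
- by move=> n; rewrite -[X in measurable X]setTI; apply: mphi => //; exact: mF.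
- apply/trivIsetP => /= i j _ _ ij; rewrite -preimage_setI.
  by move/trivIsetP : tF => /(_ _ _ _ _ ij) ->//; rewrite preimage_set0.
- by rewrite -preimage_bigcup -[X in measurable X]setTI; apply: mphi.
Qed.

HB.instance Definition _ := isMeasure.Build _ _ _
  shiftm shiftm0 shiftm_ge0 shiftm_sigma_additive.

Lemma shiftmE A : measurable A -> shiftm A = lebesgue_measure A.
Proof.
move=> mA; apply/esym; apply: (@lebesgue_measure_unique R shiftm) => //.
move=> X [[a b] _ <-] /=.
rewrite /shiftm.
have -> : phi @^-1` `]a, b]%classic = `](a - s)%R, (b - s)%R]%classic.
  apply/seteqP; split => x /=; rewrite !in_itv /= /phi.
    by move=> /andP[h1 h2]; rewrite ltrBlDr lerBrDr h1 h2.
  by move=> /andP[h1 h2]; rewrite -ltrBlDr -lerBrDr h1 h2.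
rewrite !lebesgue_measure_itv /= !lte_fin ltrD2r.
case: ifPn => // _; congr (_%:E); lra.
Qed.
End Shift.

Section Shift2.
Variable R : realType.
Local Open Scope ereal_scope.

Lemma integral_shift (h : R -> \bar R) (s : R) :
  measurable_fun setT h -> (forall x, 0 <= h x) ->
  \int[lebesgue_measure]_x h (x + s)%R = \int[lebesgue_measure]_x h x.
Proof.
move=> mh h0.
pose phi := (fun x : measurableTypeR R => (x + s)%R : measurableTypeR R).
have mphi : measurable_fun setT phi by exact: measurable_funD.
have := @ge0_integral_pushforward _ _ (measurableTypeR R) (measurableTypeR R) R _ mphi lebesgue_measure setT h
  measurableT mh (fun y _ => h0 y).
rewrite preimage_setT => <-.
apply: eq_measure_integral => A mA _.
exact: (shiftmE s mA).
Qed.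
End Shift2.

Section Wrap.
Variable R : realType.

Definition p2 : R := 2 * pi.
Lemma p2_gt0 : 0 < p2.
Proof. by rewrite /p2 mulr_gt0 // pi_gt0. Qed.

Definition wrap (y : R) : R := y - p2 * (Num.floor (y / p2))%:~R.

Lemma wrap_itv y : 0 <= wrap y < p2.
Proof.
have hp := p2_gt0.
have /andP[h1 h2] := floor_itv (y / p2).
have e : y = (y / p2) * p2 by rewrite mulfVK ?gt_eqF.
rewrite intrD in h2.
move: h1 h2; rewrite /wrap.
set q := y / p2; set f := (Num.floor q)%:~R.
move: e => -> h1 h2.
rewrite -/q; have h3 : q < f + 1 by move: h2; rewrite (_ : 1%:~R = 1).
apply/andP; split; nra.
Qed.

Lemma wrap_id y : 0 <= y < p2 -> wrap y = y.
Proof.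
move=> /andP[h1 h2]; have hp := p2_gt0.
rewrite /wrap (_ : Num.floor (y / p2) = 0) ?mulr0 ?subr0 //.
apply: floor_def; apply/andP; split.
  by rewrite mulr_ge0 // invr_ge0 ltW.
by rewrite add0r (_ : 1%:~R = 1) // ltr_pdivrMr // mul1r.
Qed.

Lemma wrapDz y (k : int) : wrap (y + k%:~R * p2) = wrap y.
Proof.
have hp := p2_gt0.
rewrite /wrap mulrDl mulfK ?gt_eqF // floorDrz ?intr_int // intrKfloor intrD.
rewrite mulrDr; lra.
Qed.

Lemma wrapE y : y = wrap y + (Num.floor (y / p2))%:~R * p2.
Proof. rewrite /wrap mulrC; lra. Qed.

Lemma wrapW y z : wrap (wrap y + z) = wrap (y + z).
Proof.
have e := wrapE y.
rewrite [in RHS](_ : y + z = (wrap y + z) + (Num.floor (y / p2))%:~R * p2).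
  by rewrite wrapDz.
by rewrite {1}e; ring.
Qed.

Lemma measurable_wrap : measurable_fun setT wrap.
Proof.
apply: measurable_funB => //.
apply: measurable_funM => //.
pose g := fun y : R => (Num.floor (y / p2))%:~R : R.
apply: (@nondecreasing_measurable R setT g) => // a b ab.
rewrite /g ler_int; apply: le_floor.
by rewrite ler_pM2r // invr_gt0 p2_gt0.
Qed.

End Wrap.

Section OneD.
Variable R : realType.
Local Open Scope ereal_scope.
Local Notation p2 := (@p2 R).

Definition ii (a b x : R) : \bar R := (\1_(`[a, b[%classic) x)%:E.

Lemma iiE a b x : ii a b x = if (a <= x)%R && (x < b)%R then 1 else 0.
Proof.
rewrite /ii indicE. set P := (x \in _).
have -> : P = (a <= x < b)%R.
  rewrite /P; apply/idP/idP => [/set_mem /=|h]; [by rewrite in_itv|by apply/mem_set; rewrite /= in_itv].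
by case: ifPn.
Qed.

Lemma ii_ge0 a b x : 0 <= ii a b x.
Proof. by rewrite iiE; case: ifPn. Qed.

Lemma measurable_ii a b : measurable_fun setT (ii a b).
Proof. apply/measurable_EFinP; exact: measurable_indic. Qed.

Lemma ii_shift a b s y : ii a b (y - s)%R = ii (a + s)%R (b + s)%R y.
Proof. by rewrite !iiE lerBrDr ltrBlDr. Qed.

Lemma ii_split (G : R -> \bar R) (a b c y : R) : (a <= b)%R -> (b <= c)%R ->
  ii a b y * G y + ii b c y * G y = ii a c y * G y.
Proof.
move=> ab bc; rewrite !iiE.
case: (leP a y) => h1; case: (ltP y b) => h2; case: (leP b y) => h3;
  case: (ltP y c) => h4 /=; rewrite ?mul1e ?mul0e ?adde0 ?add0e //; exfalso; lra.
Qed.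

Lemma wrap_pres (G : R -> \bar R) (c : R) :
  measurable_fun setT G -> (forall x, 0 <= G x) ->
  \int[lebesgue_measure]_x (ii 0 p2 x * G (wrap (x + c)%R)) =
  \int[lebesgue_measure]_x (ii 0 p2 x * G x).
Proof.
move=> mG G0.
set c' := wrap c.
have /andP[hc0 hcp] := wrap_itv c.
have hp := @p2_gt0 R.
rewrite -/c' in hc0 hcp.
have E1 : forall x, ii 0 p2 x * G (wrap (x + c)%R) =
   ii 0 (p2 - c')%R x * G (x + c')%R + ii (p2 - c')%R p2 x * G (x + (c' - p2))%R.
  move=> x.
  have ewc : wrap (x + c)%R = wrap (x + c')%R.
    by rewrite /c' [in RHS]addrC wrapW addrC.
  rewrite ewc !iiE.
  case: (leP 0%R x) => h1; case: (ltP x (p2 - c')%R) => h2; case: (leP (p2 - c')%R x) => h3;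
    case: (ltP x p2) => h4 /=; rewrite ?mul1e ?mul0e ?adde0 ?add0e //; try (exfalso; lra).
  - by rewrite wrap_id //; apply/andP; split; lra.
  - have -> : (x + c' = (x + (c' - p2)) + (1%:~R) * p2)%R by rewrite mul1r; ring.
    by rewrite (wrapDz (x + (c' - p2)) 1) wrap_id //; apply/andP; split; lra.
have mS : forall (a b s : R), measurable_fun setT (fun x => ii a b x * G (x + s)%R).
  move=> a b s; apply: emeasurable_funM; first exact: measurable_ii.
  by apply: (measurableT_comp mG); exact: measurable_funD.
have S0 : forall (a b s : R) x, 0 <= ii a b x * G (x + s)%R.
  by move=> a b s x; apply: mule_ge0; [exact: ii_ge0|exact: G0].
under eq_integral => x _ do rewrite E1.
rewrite ge0_integralD //; try (by move=> x _; exact: S0); try exact: mS.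
have mH : forall a b, measurable_fun setT (fun y => ii a b y * G y).
  move=> a b; apply: emeasurable_funM => //; exact: measurable_ii.
have H0 : forall a b y, 0 <= ii a b y * G y.
  by move=> a b y; apply: mule_ge0; [exact: ii_ge0|exact: G0].
have e : forall a b s y, ii a b y = ii (a + s)%R (b + s)%R (y + s)%R.
  by move=> a b s y; rewrite -ii_shift addrK.
have T1 : \int[lebesgue_measure]_x (ii 0 (p2 - c')%R x * G (x + c')%R) =
          \int[lebesgue_measure]_x (ii c' p2 x * G x).
  rewrite -(integral_shift (h := fun y => ii c' p2 y * G y) c' (mH _ _) (H0 _ _)).
  by apply: eq_integral => x _; rewrite (e 0%R (p2 - c')%R c') add0r subrK.
have T2 : \int[lebesgue_measure]_x (ii (p2 - c')%R p2 x * G (x + (c' - p2))%R) =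
          \int[lebesgue_measure]_x (ii 0 c' x * G x).
  rewrite -(integral_shift (h := fun y => ii 0 c' y * G y) (c' - p2)%R (mH _ _) (H0 _ _)).
  apply: eq_integral => x _; rewrite (e (p2 - c')%R p2 (c' - p2)%R).
  by rewrite (_ : (p2 - c' + (c' - p2) = 0)%R); [rewrite (_ : (p2 + (c' - p2) = c')%R) //|]; ring.
rewrite T1 T2 addeC -ge0_integralD //; try (by move=> x _; exact: H0); try exact: mH.
apply: eq_integral => x _; apply: ii_split; lra.
Qed.
End OneD.

Section Tup.
Variable R : realType.
Local Open Scope ereal_scope.
Local Notation p2 := (@p2 R).

Definition Wt n (c t : n.-tuple R) : n.-tuple R := [tuple wrap (tnth t i + tnth c i)%R | i < n].
Definition boxS n : set (n.-tuple R) := [set t | forall i, (0 <= tnth t i < p2)%R].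
Definition bind n (t : n.-tuple R) : \bar R := (\1_(@boxS n) t)%:E.

Lemma ind1 T (A : set T) x : A x -> (\1_A x)%:E = 1 :> \bar R.
Proof. by move=> h; rewrite indicE mem_set. Qed.
Lemma ind0 T (A : set T) x : ~ A x -> (\1_A x)%:E = 0 :> \bar R.
Proof. by move=> h; rewrite indicE memNset. Qed.

Lemma tnth_cons0 n (x : R) (t : n.-tuple R) : tnth (cons_tuple x t) ord0 = x.
Proof. exact: tnth0. Qed.
Lemma tnth_consS n (x : R) (t : n.-tuple R) i : tnth (cons_tuple x t) (lift ord0 i) = tnth t i.
Proof. exact: tnthS. Qed.

Lemma Wt_cons n (x y : R) (c t : n.-tuple R) :
  Wt (cons_tuple x c) (cons_tuple y t) = cons_tuple (wrap (y + x)%R) (Wt c t).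
Proof.
apply: eq_from_tnth => i; rewrite tnth_mktuple.
case: (unliftP ord0 i) => [j ->|->].
  by rewrite !tnth_consS tnth_mktuple.
by rewrite !tnth_cons0.
Qed.

Lemma boxS_cons n (y : R) (t : n.-tuple R) :
  boxS (cons_tuple y t) <-> (0 <= y < p2)%R /\ boxS t.
Proof.
split.
  move=> h; split; first by have := h ord0; rewrite tnth_cons0.
  by move=> i; have := h (lift ord0 i); rewrite tnth_consS.
move=> [hy ht] i; case: (unliftP ord0 i) => [j ->|->].
  by rewrite tnth_consS.
by rewrite tnth_cons0.
Qed.

Lemma bind_cons n (y : R) (t : n.-tuple R) :
  bind (cons_tuple y t) = ii 0 p2 y * bind t.
Proof.
rewrite /bind iiE.
have [hy|hy] := boolP (0 <= y < p2)%R.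
  have [ht|ht] := pselect (boxS t).
    by rewrite !ind1 ?mul1e //; apply/boxS_cons.
  by rewrite !ind0 ?mule0 // => /boxS_cons[].
rewrite mul0e ind0 // => /boxS_cons[h _]; by rewrite h in hy.
Qed.

Lemma measurable_boxS n : measurable (@boxS n).
Proof.
have -> : @boxS n = \bigcap_(i in setT) ((fun t => tnth t i) @^-1` `[0%R, p2[%classic).
  apply/seteqP; split => t /=.
    move=> h i _ /=; rewrite in_itv /=; exact: h.
  by move=> h i; have := h i I; rewrite /= in_itv.
apply: fin_bigcap_measurable; first exact: finite_finset.
move=> i _; rewrite -[X in measurable X]setTI.
exact: (measurable_tnth i).
Qed.

Lemma measurable_bind n : measurable_fun setT (@bind n).
Proof. apply/measurable_EFinP; apply: measurable_indic; exact: measurable_boxS. Qed.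

Lemma bind_ge0 n (t : n.-tuple R) : 0 <= bind t.
Proof. by rewrite /bind lee_fin indicE. Qed.

Lemma measurable_Wt2 n : measurable_fun setT (fun p : n.-tuple R * n.-tuple R => Wt p.1 p.2).
Proof.
apply/measurable_fun_tnthP => i.
set g := (X in measurable_fun _ X).
have -> : g = (fun p => wrap (tnth p.2 i + tnth p.1 i)%R).
  by apply/funext => p; rewrite /g /= tnth_mktuple.
apply: (measurableT_comp (@measurable_wrap R)).
apply: measurable_funD.
  exact: (measurableT_comp (measurable_tnth i) measurable_snd).
exact: (measurableT_comp (measurable_tnth i) measurable_fst).
Qed.

Lemma measurable_Wt n (c : n.-tuple R) : measurable_fun setT (Wt c).
Proof. exact: (measurableT_comp (@measurable_Wt2 n) (pair1_measurable c)). Qed.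

End Tup.

Section MP.
Variable R : realType.
Local Open Scope ereal_scope.
Local Notation p2 := (@p2 R).

Lemma MP n (c : n.-tuple R) (f : n.-tuple R -> \bar R) :
  measurable_fun setT f -> (forall t, 0 <= f t) ->
  iterint (fun t => bind t * f (Wt c t)) = iterint (fun t => bind t * f t).
Proof.
elim: n c f => [|n IH] c f mf f0.
  by rewrite /= (tuple0 (Wt c [tuple])).
case/tupleP: c => x c /=.
pose g := fun z : R * n.-tuple R => bind z.2 * f (cons_tuple z.1 z.2).
have mg : measurable_fun setT g.
  apply: emeasurable_funM.
    exact: (measurableT_comp (@measurable_bind R n) measurable_snd).
  exact: (measurableT_comp mf (@mcons R n)).
have g0 : forall z, 0 <= g z by move=> z; apply: mule_ge0; [exact: bind_ge0|exact: f0].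
pose G := fun z : R => iterint (fun t => g (z, t)).
have mG : measurable_fun setT G := iterint_mfun mg g0.
have G0 : forall z, 0 <= G z by move=> z; apply: iterint_ge0.
transitivity (\int[lebesgue_measure]_y (ii 0 p2 y * G (wrap (y + x)%R))).
  apply: eq_integral => y _.
  have -> : (fun t => bind (cons_tuple y t) * f (Wt [tuple of x :: c] (cons_tuple y t))) =
     (fun t => ii 0 p2 y * (bind t * f (cons_tuple (wrap (y + x)%R) (Wt c t)))).
    by apply/funext => t; rewrite bind_cons (Wt_cons x y c t) muleA.
  rewrite iterintZ; last exact: ii_ge0.
  - congr (_ * _).
    have mf' : measurable_fun setT (fun t => f (cons_tuple (wrap (y + x)%R) t)).
      exact: (measurableT_comp mf (@mcons1 R n _)).
    exact: (IH c _ mf' (fun _ => f0 _)).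
  - apply: emeasurable_funM; first exact: measurable_bind.
    exact: (measurableT_comp mf (measurableT_comp (@mcons1 R n _) (measurable_Wt c))).
  - by move=> t; apply: mule_ge0; [exact: bind_ge0|exact: f0].
rewrite (wrap_pres x mG G0).
apply: eq_integral => y _.
rewrite /G /g /= -iterintZ //; last exact: ii_ge0.
- by congr iterint; apply/funext => t; rewrite bind_cons muleA.
- exact: (measurableT_comp mg (pair1_measurable y)).
- by move=> t; apply: mule_ge0; [exact: bind_ge0|exact: f0].
Qed.

End MP.

Section Sets.
Variable R : realType.
Local Open Scope ereal_scope.
Local Notation p2 := (@p2 R).
Variable n : nat.
Implicit Types A B E : set (n.-tuple R).
Local Notation boxS := (@boxS R n).

Lemma mind A : measurable A -> measurable_fun setT (fun t => (\1_A t)%:E : \bar R).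
Proof. by move=> mA; apply/measurable_EFinP; exact: measurable_indic. Qed.

Lemma ind_ge0 T (A : set T) x : 0 <= (\1_A x)%:E :> \bar R.
Proof. by rewrite lee_fin indicE. Qed.

Lemma volT_ge0 A : 0 <= volT A.
Proof. by apply: iterint_ge0 => t; exact: ind_ge0. Qed.

Lemma volT0 : volT (set0 : set (n.-tuple R)) = 0.
Proof.
rewrite /volT -(@iterint0 R n); congr iterint; apply/funext => t.
by rewrite ind0.
Qed.

Lemma volT_le A B : measurable A -> measurable B -> A `<=` B -> volT A <= volT B.
Proof.
move=> mA mB AB; apply: iterint_le; try exact: mind; first exact: ind_ge0.
move=> t; have [h|h] := pselect (A t).
  by rewrite !ind1 //; exact: AB.
by rewrite ind0 //; exact: ind_ge0.
Qed.

Lemma volTU A B : measurable A -> measurable B -> volT (A `|` B) <= volT A + volT B.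
Proof.
move=> mA mB; rewrite /volT -iterintD; try exact: mind; try exact: ind_ge0.
apply: iterint_le.
- apply: mind; exact: measurableU.
- exact: (emeasurable_funD (mind mA) (mind mB)).
- exact: ind_ge0.
move=> t; have [h|h] := pselect (A t).
  rewrite (ind1 R h) ind1; last by left.
  by apply: leeDl; exact: ind_ge0.
have [h'|h'] := pselect (B t).
  rewrite (ind1 R h') ind1; last by right.
  by apply: leeDr; exact: ind_ge0.
by rewrite ind0 ?adde_ge0 ?ind_ge0 // => -[].
Qed.

Lemma volT_split B E : measurable B -> measurable E ->
  volT B = volT (B `&` E) + volT (B `\` E).
Proof.
move=> mB mE; rewrite /volT -iterintD; try exact: mind; try exact: ind_ge0.
- congr iterint; apply/funext => t.
  have [h|h] := pselect (B t); last first.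
    by rewrite !ind0 ?adde0 // => -[].
  have [h'|h'] := pselect (E t).
    by rewrite ind1 // ind1 // (@ind0 R _ (B `\` E)) ?adde0 // => -[].
  by rewrite ind1 // (@ind0 R _ (B `&` E)) ?add0e ?ind1 // => -[].
- apply: mind; exact: measurableI.
- apply: mind; exact: measurableD.
Qed.

Lemma MPset (c : n.-tuple R) E : measurable E ->
  volT (boxS `&` Wt c @^-1` E) = volT (boxS `&` E).
Proof.
move=> mE; rewrite /volT.
have e1 : forall F, (fun t => (\1_(boxS `&` F) t)%:E) = (fun t => bind t * (\1_F t)%:E) :> (_ -> \bar R).
  move=> F; apply/funext => t; rewrite /bind.
  have [h|h] := pselect (boxS t); last by rewrite (ind0 R h) mul0e ind0 // => -[].
  have [h'|h'] := pselect (F t).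
    by rewrite !ind1 ?mul1e.
  by rewrite (ind1 R h) mul1e (ind0 R h') ind0 // => -[].
rewrite e1 e1.
exact: (MP c (mind mE) (fun t => ind_ge0 _ _)).
Qed.

End Sets.

Section Box.
Variable R : realType.
Local Open Scope ereal_scope.
Local Notation p2 := (@p2 R).

Lemma volT_box n : volT (@boxS R n) = (p2 ^+ n)%:E.
Proof.
rewrite /volT; elim: n => [|n IH] /=.
  by rewrite ind1 // => -[].
transitivity (\int[lebesgue_measure]_y ((p2 ^+ n)%:E * ii 0 p2 y)).
  apply: eq_integral => y _.
  have -> : (fun t : n.-tuple R => (\1_(@boxS R n.+1) (cons_tuple y t))%:E) =
            (fun t => ii 0 p2 y * bind t) :> (_ -> \bar R).
    by apply/funext => t; rewrite -bind_cons.
  rewrite iterintZ ?ii_ge0 //; last first.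
  - by move=> t; exact: bind_ge0.
  - exact: measurable_bind.
  by rewrite /bind IH muleC.
rewrite ge0_integralZl //; last 3 first.
- exact: measurable_ii.
- by move=> y _; exact: ii_ge0.
- by rewrite lee_fin exprn_ge0 // ltW // p2_gt0.
rewrite /ii integral_indic // setIT.
transitivity ((p2 ^+ n)%:E * p2%:E); last by rewrite -EFinM exprSr.
congr (_ * _).
have := @lebesgue_measure_itv R `[0%R, p2[.
by rewrite /= lte_fin p2_gt0 oppr0 adde0.

Qed.
End Box.

Section Main.
Variable R : realType.
Variable d : nat.
Local Open Scope ereal_scope.
Local Notation p2 := (@p2 R).
Local Notation rt := (@row2tuple R d).
Local Notation boxS := (@boxS R d).
Local Notation torus := (@torus R d).

Definition tr (t : d.-tuple R) : 'rV[R]_d := \row_i tnth t i.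

Lemma tnth_rt x i : tnth (rt x) i = x ord0 i.
Proof. by rewrite tnth_mktuple. Qed.

Lemma rtK t : rt (tr t) = t.
Proof. by apply: eq_from_tnth => i; rewrite tnth_rt mxE. Qed.

Lemma torusE x : torus x <-> boxS (rt x).
Proof. by split => h i; move: (h i); rewrite tnth_rt. Qed.

Lemma Kp (X : set 'rV[R]_d) (P Q : set (d.-tuple R)) :
  measurable P -> measurable Q -> rt @^-1` P `<=` X -> X `<=` rt @^-1` Q ->
  volT (Q `\` P) = 0 -> leb X = volT P.
Proof.
move=> mP mQ PX XQ QP0; apply/eqP; rewrite eq_le; apply/andP; split.
  apply: (@le_trans _ _ (volT Q)).
    by apply: ereal_inf_lbound; exists Q.
  apply: (@le_trans _ _ (volT (P `|` (Q `\` P)))).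
    apply: volT_le => //; first by apply: measurableU => //; exact: measurableD.
    by move=> t Qt; have [Pt|nPt] := pselect (P t); [left|right].
  apply: (@le_trans _ _ (volT P + volT (Q `\` P))).
    by apply: volTU => //; exact: measurableD.
  by rewrite QP0 adde0.
apply: le_ereal_inf_tmp => _ [C [mC XC] <-].
apply: volT_le => // t Pt.
have : X (tr t) by apply: PX; rewrite /= rtK.
by move/XC; rewrite /= rtK.
Qed.

Lemma tnth_Wt n (c t : n.-tuple R) i : tnth (Wt c t) i = wrap (tnth t i + tnth c i)%R.
Proof. by rewrite tnth_mktuple. Qed.

Lemma transE (M : set 'rV[R]_d) a x : M `<=` torus ->
  (translate M a x <-> boxS (rt x) /\ exists2 m, M m & Wt (rt (-a)) (rt x) = rt m).
Proof.
move=> MT; split.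
  move=> [tx [m Mm hk]]; split; first exact/torusE.
  exists m => //; apply: eq_from_tnth => i.
  rewrite tnth_Wt !tnth_rt mxE.
  have [k hk'] := hk i.
  have -> : (x ord0 i - a ord0 i = m ord0 i + k%:~R * p2)%R by rewrite hk' /p2; ring.
  by rewrite wrapDz wrap_id //; exact: (MT m Mm i).
move=> [bx [m Mm e]]; split; first exact/torusE.
exists m => // i.
have := congr1 (fun t => tnth t i) e; rewrite /= tnth_Wt !tnth_rt mxE => e'.
exists (Num.floor ((x ord0 i - a ord0 i) / p2)).
have := wrapE (x ord0 i - a ord0 i)%R; rewrite e'.
rewrite -/p2 => h; rewrite /p2 in h *; lra.
Qed.

Lemma measurable_preW n (c : n.-tuple R) (E : set (n.-tuple R)) :
  measurable E -> measurable (Wt c @^-1` E).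
Proof. by move=> mE; rewrite -[X in measurable X]setTI; exact: measurable_Wt. Qed.

Lemma volT0E n (A : set (n.-tuple R)) : A = set0 -> volT A = 0.
Proof. by move=> ->; exact: volT0. Qed.

Lemma le0_eq0 (x : \bar R) : x <= 0 -> 0 <= x -> x = 0.
Proof. by move=> h1 h2; apply/eqP; rewrite eq_le h1 h2. Qed.

Section Core.
Variables (M : set 'rV[R]_d) (B1 B2 : set (d.-tuple R)).
Hypotheses (HMT : M `<=` torus) (mB1 : measurable B1) (mB2 : measurable B2)
  (s1 : rt @^-1` B1 `<=` M) (s2 : M `<=` rt @^-1` B2) (n12 : volT (B2 `\` B1) = 0).

Let B12 : B1 `<=` B2.
Proof. by move=> t h; have := s2 (s1 (t := tr t) _); rewrite /= rtK; apply. Qed.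

Let B := B1 `&` boxS.
Let B' := B2 `&` boxS.
Let mB : measurable B. Proof. by apply: measurableI => //; exact: measurable_boxS. Qed.
Let mB' : measurable B'. Proof. by apply: measurableI => //; exact: measurable_boxS. Qed.
Let BB' : volT (B' `\` B) = 0.
Proof.
apply: le0_eq0; last exact: volT_ge0.
rewrite -n12; apply: volT_le; try exact: measurableD.
by move=> t [[h1 h2] h3]; split => // h4; apply: h3.
Qed.

Let N0 c : volT (boxS `&` Wt c @^-1` (B' `\` B)) = 0.
Proof.
rewrite MPset; last exact: measurableD.
apply: le0_eq0; last exact: volT_ge0.
rewrite -BB'; apply: volT_le; try exact: measurableD.
  by apply: measurableI; [exact: measurable_boxS|exact: measurableD].
by move=> t [].
Qed.

Definition DD c := volT (B `\` Wt c @^-1` B).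

Lemma DD_ge0 c : 0 <= DD c.
Proof. exact: volT_ge0. Qed.

Lemma LamE a : Lambda M a = DD (rt (-a)).
Proof.
set c := rt (-a).
have mP : measurable (B `\` Wt c @^-1` B') by apply: measurableD => //; exact: measurable_preW.
have mQ : measurable (B' `\` Wt c @^-1` B) by apply: measurableD => //; exact: measurable_preW.
have mN : measurable (boxS `&` Wt c @^-1` (B' `\` B)).
  apply: measurableI; first exact: measurable_boxS.
  by apply: measurable_preW; exact: measurableD.
rewrite /Lambda (Kp (P := B `\` Wt c @^-1` B') (Q := B' `\` Wt c @^-1` B)) //.
- apply/eqP; rewrite eq_le; apply/andP; split.
    apply: volT_le => //; first by apply: measurableD => //; exact: measurable_preW.
    by move=> t [[h1 h2] h3]; split; [split|move=> [h4 h5]; apply: h3; split; [exact: B12|]].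
  apply: (@le_trans _ _ (volT ((B `\` Wt c @^-1` B') `|` (boxS `&` Wt c @^-1` (B' `\` B))))).
    apply: volT_le; first by apply: measurableD => //; exact: measurable_preW.
      exact: measurableU.
    move=> t [[h1 h2] h3].
    have [h4|h4] := pselect (B' (Wt c t)); last by left.
    by right; split => //; split.
  by apply: (le_trans (volTU mP mN)); rewrite N0 adde0.
- move=> x [[h1 h2] h3] /=; split; first by apply: s1.
  move/(transE _ _ HMT) => [_ [m Mm]]; rewrite -/c => e; apply: h3; rewrite /= e.
  by split; [exact: s2|exact/torusE/HMT].
- move=> x [Mx nT] /=; split; first by split; [exact: s2|exact/torusE/HMT].
  move=> WB; apply: nT; apply/(transE _ _ HMT); split; first exact/torusE/HMT.
  exists (tr (Wt c (rt x))); last by rewrite rtK.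
  by apply: s1; rewrite /= rtK; case: WB.
- apply: le0_eq0; last exact: volT_ge0.
  rewrite -[0](adde0 0) -{1}BB' -(N0 c).
  apply: (le_trans _ (volTU _ mN)); last exact: measurableD.
  apply: volT_le => //; first exact: measurableD.
    by apply: measurableU => //; exact: measurableD.
  move=> t [[h1 h2] h3].
  have [h4|h4] := pselect (B t); last by left.
  right; split; first by case: h1.
  split => //; apply: contrapT => h5; apply: h3; split => //.
Qed.

Lemma DD0 : DD (rt 0) = 0.
Proof.
apply: volT0E; apply/seteqP; split => // t [[h1 h2] h3]; apply: h3; rewrite /preimage /=.
have -> : Wt (rt 0) t = t.
  apply: eq_from_tnth => i; rewrite tnth_Wt tnth_rt mxE addr0 wrap_id //.
by split.
Qed.

Lemma Wt_comp (u v : 'rV[R]_d) t : Wt (rt u) (Wt (rt v) t) = Wt (rt (u + v)) t.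
Proof.
apply: eq_from_tnth => i; rewrite !tnth_Wt !tnth_rt mxE wrapW.
by congr wrap; ring.
Qed.

Lemma DDadd u v : DD (rt (u + v)) <= DD (rt u) + DD (rt v).
Proof.
have mDu : measurable (B `\` Wt (rt u) @^-1` B) by apply: measurableD => //; exact: measurable_preW.
have mDv : measurable (B `\` Wt (rt v) @^-1` B) by apply: measurableD => //; exact: measurable_preW.
have mN : measurable (boxS `&` Wt (rt v) @^-1` (B `\` Wt (rt u) @^-1` B)).
  by apply: measurableI; [exact: measurable_boxS|exact: measurable_preW].
apply: (@le_trans _ _ (volT ((B `\` Wt (rt v) @^-1` B) `|`
                 (boxS `&` Wt (rt v) @^-1` (B `\` Wt (rt u) @^-1` B))))).
  apply: volT_le => //; first by apply: measurableD => //; exact: measurable_preW.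
    exact: measurableU.
  move=> t [[h1 h2] h3].
  have [h4|h4] := pselect (B (Wt (rt v) t)); last by left.
  right; split => //; split => //=.
  by rewrite Wt_comp.
apply: (le_trans (volTU mDv mN)).
rewrite MPset //.
have -> : boxS `&` (B `\` Wt (rt u) @^-1` B) = B `\` Wt (rt u) @^-1` B.
  by apply/seteqP; split => t; [case|move=> [[h1 h2] h3]].
by rewrite addeC.
Qed.

Lemma LebM : leb M = volT B.
Proof.
apply: (Kp (Q := B')) => //.
- by move=> x [h1 h2]; exact: (s1 h1).
- by move=> x Mx; split; [exact: s2|exact/torusE/HMT].
Qed.

Lemma LebT : leb torus = volT boxS.
Proof.
apply: Kp.
- exact: measurable_boxS.
- exact: measurable_boxS.
- by move=> x /torusE.
- by move=> x /torusE.
- by apply: volT0E; rewrite setDv.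
Qed.

Lemma volT_boxI (F : set (d.-tuple R)) :
  volT (boxS `&` F) = iterint (fun t => bind t * (\1_F t)%:E).
Proof.
rewrite /volT; congr iterint; apply/funext => t; rewrite /bind.
have [h|h] := pselect (boxS t); last by rewrite (ind0 R h) mul0e ind0 // => -[].
have [h'|h'] := pselect (F t).
  by rewrite !ind1 ?mul1e.
by rewrite (ind1 R h) mul1e (ind0 R h') ind0 // => -[].
Qed.

Lemma Wt_comm n (s t : n.-tuple R) : Wt s t = Wt t s.
Proof. by apply: eq_from_tnth => i; rewrite !tnth_Wt addrC. Qed.

Lemma key : (forall c, DD c = 0) -> volT B * volT boxS = volT B * volT B.
Proof.
move=> H.
set V := volT B.
have mI : measurable_fun setT (fun t : d.-tuple R => (\1_B t)%:E : \bar R) by exact: mind.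
pose F := fun p : d.-tuple R * d.-tuple R =>
  bind p.1 * ((\1_B p.2)%:E * (\1_B (Wt p.1 p.2))%:E).
have mF : measurable_fun setT F.
  apply: emeasurable_funM; first exact: (measurableT_comp (@measurable_bind R d) measurable_fst).
  apply: emeasurable_funM; first exact: (measurableT_comp mI measurable_snd).
  exact: (measurableT_comp mI (@measurable_Wt2 R d)).
have F0 : forall p, 0 <= F p.
  by move=> p; apply: mule_ge0; [exact: bind_ge0|apply: mule_ge0; exact: ind_ge0].
have C1 : forall s, iterint (fun t => (\1_B t)%:E * (\1_B (Wt s t))%:E) = V.
  move=> s; have := volT_split mB (measurable_preW s mB).
  rewrite -/(DD s) H adde0 -/V => ->.
  rewrite /volT; congr iterint; apply/funext => t.
  have [h|h] := pselect (B t); last by rewrite (ind0 R h) mul0e ind0 // => -[].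
  have [h'|h'] := pselect (B (Wt s t)).
    by rewrite !ind1 ?mul1e.
  by rewrite (ind1 R h) mul1e (ind0 R h') ind0 // => -[].
have C2 : forall t, iterint (fun s => bind s * (\1_B (Wt s t))%:E) = V.
  move=> t.
  have -> : (fun s => bind s * (\1_B (Wt s t))%:E) = (fun s => bind s * (\1_B (Wt t s))%:E).
    by apply/funext => s; rewrite Wt_comm.
  rewrite (MP t mI (fun _ => ind_ge0 _ _ _)) -volT_boxI.
  congr volT; apply/seteqP; split => u; [by case|move=> h; split => //; exact: h.2].
have := iterint_swap mF F0.
have -> : (fun s => iterint (fun t => F (s, t))) = (fun s => V * bind s).
  apply/funext => s; rewrite /F /= iterintZ ?bind_ge0 //.
  - by rewrite C1 muleC.
  - apply: emeasurable_funM => //.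
    exact: (measurableT_comp mI (@measurable_Wt R d s)).
have -> : (fun t => iterint (fun s => F (s, t))) = (fun t => V * (\1_B t)%:E).
  apply/funext => t; rewrite /F /=.
  have -> : (fun s => bind s * ((\1_B t)%:E * (\1_B (Wt s t))%:E)) =
            (fun s => (\1_B t)%:E * (bind s * (\1_B (Wt s t))%:E)).
    by apply/funext => s; rewrite muleCA.
  rewrite iterintZ ?ind_ge0 //.
  - by rewrite C2 muleC.
  - apply: emeasurable_funM; first exact: measurable_bind.
    exact: (measurableT_comp mI (measurableT_comp (@measurable_Wt2 R d) (pair2_measurable t))).
  - by move=> s; apply: mule_ge0; [exact: bind_ge0|exact: ind_ge0].
rewrite !iterintZ //; try exact: volT_ge0; try exact: measurable_bind; try exact: mI;
  try (by move=> t; exact: bind_ge0); try (by move=> t; exact: ind_ge0).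
Qed.

End Core.

End Main.


Theorem mainTheorem4 (R : realType) (d : nat) (M : set 'rV[R]_d)
    (HMT : M `<=` @torus R d) (HMmeas : leb_measurable M) :
  ((irrelevant M 0
    /\ (forall a b : 'rV[R]_d,
          irrelevant M a -> irrelevant M b -> irrelevant M (a + b))
    /\ (forall (c : R) (a : 'rV[R]_d), irrelevant M a -> irrelevant M (c *: a)))
  /\ ((0 < leb M)%E -> (leb M < leb (@torus R d))%E ->
      exists i : 'I_d, ~ irrelevant M (@unitv R d i))).
Proof.
case: HMmeas => B1 [B2 [mB1 mB2 s1 s2 n12]].
have LamE' := LamE HMT mB1 mB2 s1 s2 n12.
have irrE : forall a, irrelevant M a <-> forall k : R, DD B1 (row2tuple (- (k *: a))) = 0%E.
  by move=> a; split => h k; [rewrite -LamE' | rewrite LamE']; exact: h.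
have P1 : irrelevant M 0 by apply/irrE => k; rewrite scaler0 oppr0; exact: DD0.
have P2 : forall a b, irrelevant M a -> irrelevant M b -> irrelevant M (a + b).
  move=> a b /irrE Ha /irrE Hb; apply/irrE => k.
  have := DDadd mB1 (- (k *: a)) (- (k *: b)); rewrite Ha Hb adde0 -opprD -scalerDr => h.
  by apply: le0_eq0 => //; exact: DD_ge0.
have P3 : forall c a, irrelevant M a -> irrelevant M (c *: a).
  by move=> c a /irrE Ha; apply/irrE => k; rewrite scalerA; exact: Ha.
split; first by split => //; split.
move=> Mpos Mlt.
apply: contrapT => Hn.
have Hall : forall i, irrelevant M (@unitv R d i).
  by move=> i; apply: contrapT => h; apply: Hn; exists i.
have Irr : forall a, irrelevant M a.
  move=> a; rewrite (row_sum_delta a).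
  apply: (big_ind (irrelevant M)) => //.
  by move=> i _; apply: P3; exact: Hall i.
have Dz : forall c, DD B1 c = 0%E.
  move=> c; have := (irrE (- tr c)).1 (Irr _) 1.
  by rewrite scale1r opprK rtK.
have K := key mB1 Dz.
rewrite (LebM HMT mB1 mB2 s1 s2 n12) LebT volT_box in Mpos Mlt.
rewrite volT_box in K.
move: Mpos Mlt K; case: (volT _) => [v| |] //.
move=> v0 vlt /eqP; rewrite -!EFinM eqe => /eqP e.
rewrite lte_fin in v0; rewrite lte_fin in vlt.
have : (p2 R ^+ d = v)%R by apply: (mulfI (x := v)) => //; rewrite gt_eqF.
by move=> hv; rewrite hv ltxx in vlt.
Qed.
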